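(* Let $\ell\le L_1$ be positive integers and $L\ge2$. For every $(p,n,L_1)$-multi-labelling $\mathcal M$ of an $L$-graph, $\Delta(\mathcal M)\ge0$.
   Context: An $L$-graph is a single cycle with $2L$ vertices and $2L$ edges whose vertices alternate between ''$n$-vertices'' and ''$p$-vertices'' (so there are $L$ of each). A $(p,n,L_1)$-multi-labelling assigns to each $n$-vertex an $n$-label in $[n]$ and to the $r$-th $p$-vertex ($r=1,\dots,L$) a tuple of $d_r$ $p$-labels in $[p]$, such that: (i) the $n$-label of each $n$-vertex differs from the $n$-labels of the two $n$-vertices immediately preceding and following it in the cycle; (ii) $\ell\le d_r\le L_1$ and the $d_r$ $p$-labels of each tuple are distinct; (iii) for each $n$-label $i$ and $p$-label $j$, the number of edges of the cycle whose $n$-vertex endpoint has label $i$ and whose $p$-vertex endpoint has $j$ in its tuple is either $0$ or at least $2$. Let $r(\mathcal M)$ be the number of distinct $n$-labels and $c(\mathcal M)$ the number of distinct $p$-labels (elements of $[p]$) used. The excess is $\Delta(\mathcal M)=1+\frac L2+\sum_{r=1}^L\frac{d_r}{2\ell}-r(\mathcal M)-\frac{c(\mathcal M)}{\ell}$. *)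

(* Defs.v *)
From mathcomp Require Import all_boot all_order all_algebra.
Set Implicit Arguments. Unset Strict Implicit. Unset Printing Implicit Defensive.
Import Order.TTheory GRing.Theory Num.Theory.

(* An L-graph: cycle n_0, p_0, n_1, p_1, ..., n_{L-1}, p_{L-1}, (back to n_0).  Edges: for each r, {n_r, p_r} and {p_r, n_{r+1 mod L}}.
   n-labels are in 'I_n (= [n] shifted by one), p-labels in 'I_p.
   A multi-labelling is given by a : 'I_L -> 'I_n (n-labels of n-vertices) and
   b : 'I_L -> seq 'I_p (the tuple of p-labels of the r-th p-vertex). *)

Definition edge_count (n p L : nat) (a : 'I_L -> 'I_n) (b : 'I_L -> seq 'I_p)
    (i : 'I_n) (j : 'I_p) : nat :=
  \sum_(r < L) (((a r == i) && (j \in b r)) + ((a (ordS r) == i) && (j \in b r))).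

Definition is_multilabelling (p n L1 ell L : nat)
    (a : 'I_L -> 'I_n) (b : 'I_L -> seq 'I_p) : Prop :=
  (forall r : 'I_L, a r != a (ord_pred r) /\ a r != a (ordS r)) /\
  (forall r : 'I_L, (ell <= size (b r) <= L1)%N /\ uniq (b r)) /\
  (forall (i : 'I_n) (j : 'I_p), edge_count a b i j = 0%N \/ (2 <= edge_count a b i j)%N).

Definition r_of (n L : nat) (a : 'I_L -> 'I_n) : nat := #|[set a r | r : 'I_L]|.

Definition c_of (p L : nat) (b : 'I_L -> seq 'I_p) : nat :=
  #|[set j : 'I_p | [exists r : 'I_L, j \in b r]]|.

Local Open Scope ring_scope.

Definition excess (p n ell L : nat) (a : 'I_L -> 'I_n) (b : 'I_L -> seq 'I_p) : rat :=
  1 + (L%:R / 2) + (\sum_(r < L) (size (b r))%:R / (2 * ell%:R))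
    - (r_of a)%:R - (c_of b)%:R / ell%:R.

(* Main.v *)
Require Import Defs.
From mathcomp Require Import all_boot all_order all_algebra.
From mathcomp Require Import ring lra zify.
Set Implicit Arguments. Unset Strict Implicit. Unset Printing Implicit Defensive.
Import Order.TTheory GRing.Theory Num.Theory.
Local Open Scope ring_scope.
Section Key.
Variable V : eqType.

Definition cedges (s : seq V) : seq (V * V) := zip s (rot 1 s).
Definition deg (es : seq (V * V)) (v : V) : nat :=
  (\sum_(e <- es) ((e.1 == v) + (e.2 == v)))%N.
Definition adm (es : seq (V * V)) := forall v, deg es v != 1%N.
Definition loopless (s : seq V) := all (fun e : V * V => e.1 != e.2) (cedges s).
Definition nd (s : seq V) := size (undup s).
Definition Qprop (ews : seq ((V * V) * rat)) :=
  forall sub, (forall z, count_mem z sub <= count_mem z ews)%N ->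
    sub != [::] -> adm (map fst sub) ->
    \sum_(z <- sub) z.2 <= (size sub)%:R - 2.
Definition good (s : seq V) (ews : seq ((V * V) * rat)) :=
  [/\ perm_eq (map fst ews) (cedges s),
      all (fun z : (V * V) * rat => (0 <= z.2) && (z.2 <= 1)) ews,
      (2 * nd s)%:R - 2 - (size s)%:R <= \sum_(z <- ews) z.2 &
      Qprop ews].

Lemma cedges_rot1 s : cedges (rot 1 s) = rot 1 (cedges s).
Proof.
case: s => [|x l] //; rewrite /cedges rot1_cons.
case: l => [|y w] //=.
rewrite rot1_cons -rcons_cons zip_rcons; last by rewrite /= size_rcons.
by rewrite rot1_cons.
Qed.

Lemma cedges_rot k s : perm_eq (cedges (rot k s)) (cedges s).
Proof.
elim: k => [|k IH]; first by rewrite rot0.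
case: (ltnP k (size s)) => hk.
  by rewrite rotS // cedges_rot1 perm_rot.
by rewrite rot_oversize ?rot_oversize // (leq_trans hk).
Qed.

Lemma nd_rot k s : nd (rot k s) = nd s.
Proof. by rewrite /nd; apply: perm_size; apply: perm_undup; apply: mem_rot. Qed.

Lemma loopless_rot k s : loopless (rot k s) = loopless s.
Proof. by rewrite /loopless (perm_all _ (cedges_rot k s)). Qed.

Lemma count_rot k (s : seq V) (v : V) : count_mem v (rot k s) = count_mem v s.
Proof. have /permP h : perm_eq (rot k s) s by rewrite perm_rot. exact: h. Qed.

Lemma good_rot k s ews : good (rot k s) ews -> good s ews.
Proof.
case=> h1 h2 h3 h4; split => //.
  by rewrite (perm_trans h1) // cedges_rot.
by rewrite -(nd_rot k) -(size_rot k).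
Qed.

Lemma nd_cons x l : nd (x :: l) = ((x \notin l) + nd l)%N.
Proof. by rewrite /nd /=; case: (x \in l). Qed.

Lemma mem_zip1 (s t : seq V) e : e \in zip s t -> (e.1 \in s) && (e.2 \in t).
Proof.
elim: s t => [|x s IH] [|y t] //=.
rewrite in_cons => /orP [/eqP -> | /IH /andP [h1 h2]].
  by rewrite !in_cons !eqxx.
by rewrite !in_cons h1 h2 !orbT.
Qed.

Lemma mem_cedges s e : e \in cedges s -> (e.1 \in s) && (e.2 \in s).
Proof. by move/mem_zip1; rewrite mem_rot. Qed.

Lemma mem_sub (sub ews : seq ((V * V) * rat)) z :
  (forall z, count_mem z sub <= count_mem z ews)%N -> z \in sub -> z \in ews.
Proof.
move=> h; rewrite -!has_pred1 !has_count => hz.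
exact: leq_trans hz (h z).
Qed.

Lemma dec (z : (V * V) * rat) t sub :
  (forall y, count_mem y sub <= count_mem y (z :: t))%N ->
  exists b : bool, exists rest,
    (forall y, count_mem y rest <= count_mem y t)%N /\
    perm_eq sub (if b then z :: rest else rest).
Proof.
move=> h; case hz: (z \in sub).
  exists true, (rem z sub); split; last exact: perm_to_rem.
  move=> y; rewrite count_mem_rem; have := h y => /=.
  by rewrite leq_subLR eq_sym.
exists false, sub; split => // y; have := h y => /=.
case: eqP => [<-|] //=.
by move: hz => /negbT /count_memPn ->.
Qed.

Lemma deg_cons e es v : deg (e :: es) v = ((e.1 == v) + (e.2 == v) + deg es v)%N.
Proof. by rewrite /deg big_cons. Qed.

Lemma deg_perm es1 es2 v : perm_eq es1 es2 -> deg es1 v = deg es2 v.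
Proof. by move=> h; rewrite /deg (perm_big _ h). Qed.

Lemma adm_perm es1 es2 : perm_eq es1 es2 -> adm es1 -> adm es2.
Proof. by move=> h ha v; rewrite -(deg_perm v h). Qed.

Lemma deg_avoid es v : (forall e, e \in es -> (e.1 != v) && (e.2 != v)) -> deg es v = 0%N.
Proof.
move=> h; rewrite /deg big_seq big1 // => e /h /andP [h1 h2].
by rewrite (negbTE h1) (negbTE h2).
Qed.

Lemma size2 (sub ews : seq ((V * V) * rat)) :
  (forall z, count_mem z sub <= count_mem z ews)%N ->
  (forall z, z \in ews -> z.1.1 != z.1.2) ->
  sub != [::] -> adm (map fst sub) -> (2 <= size sub)%N.
Proof.
move=> hc hl; case: sub hc => [|z [|z' l]] // hc _ /(_ z.1.1).
rewrite /= deg_cons /deg big_nil eqxx.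
have := hl z (mem_sub hc (mem_head _ _)).
by rewrite eq_sym => /negbTE ->.
Qed.

Lemma sum_le1 (l : seq ((V * V) * rat)) :
  (forall z, z \in l -> z.2 <= 1) -> \sum_(z <- l) z.2 <= (size l)%:R.
Proof.
elim: l => [|z l IH] h; first by rewrite big_nil.
rewrite big_cons /= -addn1 natrD addrC lerD //.
  by apply: IH => y hy; apply: h; rewrite in_cons hy orbT.
by apply: h; rewrite mem_head.
Qed.

Lemma sumn_ge2 (l : seq V) (f : V -> nat) :
  (forall x, x \in l -> 2 <= f x)%N -> (2 * size l <= sumn (map f l))%N.
Proof.
elim: l => [|x l IH] h //=.
rewrite mulnS leq_add //; first by apply: h; rewrite mem_head.
by apply: IH => y hy; apply: h; rewrite in_cons hy orbT.
Qed.

Lemma size_sum_count (s : seq V) : size s = sumn (map (fun x => count_mem x s) (undup s)).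
Proof.
rewrite -(perm_size (perm_count_undup s)) size_flatten /shape -map_comp.
by apply: congr1; apply: eq_map => x /=; rewrite size_nseq.
Qed.


Lemma Q0 (ews : seq ((V * V) * rat)) :
  (forall z, z \in ews -> (z.2 == 0) && (z.1.1 != z.1.2)) -> Qprop ews.
Proof.
move=> h sub hc hne had.
have h2 := size2 hc (fun z hz => (proj2 (andP (h z hz)))) hne had.
rewrite big_seq big1; last by move=> z /(mem_sub hc) /h /andP [/eqP -> _].
rewrite subr_ge0 (ler_nat _ 2); exact: h2.
Qed.

Lemma avoid_deg (rest : seq ((V * V) * rat)) v :
  (forall z, z \in rest -> (z.1.1 != v) && (z.1.2 != v)) -> deg (map fst rest) v = 0%N.
Proof.
move=> h; apply: deg_avoid => e /mapP [z hz ->]; exact: h.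
Qed.

Definition IHt (m : nat) := forall s', (size s' < m)%N -> (2 <= size s')%N -> loopless s' ->
  exists ews, good s' ews.

End Key.
Section S.
Variable V : eqType.

Lemma step_merge (x v y : V) u :
  IHt V (size [:: x, v, y & u]) -> loopless [:: x, v, y & u] ->
  count_mem v [:: x, v, y & u] = 1%N -> x != y ->
  exists ews, good [:: x, v, y & u] ews.
Proof.
move=> IH hl hv hxy.
set Z := zip (y :: u) (rcons u x).
have hcs : cedges [:: x, v, y & u] = [:: (x, v), (v, y) & Z] by rewrite /cedges rot1_cons.
have hcs' : cedges [:: x, y & u] = (x, y) :: Z by rewrite /cedges rot1_cons.
move: (hl); rewrite /loopless hcs /= => /and3P [hxv hvy hZ].
have hvn : v \notin y :: u.
  apply/count_memPn; move: hv => /=; rewrite eqxx (negbTE hxv) /=; lia.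
have hl' : loopless [:: x, y & u] by rewrite /loopless hcs' /= hxy.
have [ews' [hp' hw' hsum' hQ']] := IH [:: x, y & u] (ltnSn _) isT hl'.
have : (x, y) \in map fst ews' by rewrite (perm_mem hp') hcs' mem_head.
case/mapP => z0 hz0 hz0e.
set t' := rem z0 ews'.
have hpt : perm_eq ews' (z0 :: t') := perm_to_rem hz0.
have hpt' : perm_eq (map fst t') Z.
  rewrite -(perm_cons (x, y)) -hcs'.
  apply: perm_trans hp'; rewrite perm_sym; move: (perm_map fst hpt); by rewrite /= -hz0e.
have /andP [h0a h0b] := allP hw' z0 hz0.
have hwt : forall z, z \in t' -> (0 <= z.2) && (z.2 <= 1).
  by move=> z hz; apply: (allP hw'); apply: (mem_rem hz).
have avoid : forall z, z \in t' -> (z.1.1 != v) && (z.1.2 != v).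
  move=> z hz; have : z.1 \in map fst t' by apply: map_f.
  rewrite (perm_mem hpt') => /mem_zip1 /andP [h1 h2].
  apply/andP; split; apply/eqP => e.
    by move: hvn; rewrite -e h1.
  move: h2; rewrite e mem_rcons in_cons => /orP [/eqP ev|hu].
    by move: hxv; rewrite ev eqxx.
  by move: hvn; rewrite in_cons hu orbT.
set hh := (1 + z0.2) / 2.
have hsum : \sum_(z <- ews') z.2 = z0.2 + \sum_(z <- t') z.2 by rewrite (perm_big _ hpt) big_cons.
have hnd : nd [:: x, v, y & u] = (nd [:: x, y & u]).+1.
  rewrite !nd_cons !in_cons (negbTE hxv) /=.
  by move: hvn; rewrite in_cons => /negbTE ->; rewrite add1n addnS.
exists [:: ((x, v), hh), ((v, y), hh) & t']; split.
- by rewrite hcs /= !perm_cons.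
- rewrite /= (_ : all _ t' = true); last by apply/allP.
  rewrite andbT andbb /hh; apply/andP; split; lra.
- rewrite !big_cons /= hnd; move: hsum'; rewrite hsum /hh /=.
  rewrite !mulnS !natrD /= -[(size u).+3]addn3 -[(size u).+2]addn2 !natrD; lra.
move=> sub hc hne had.
have [b1 [r1 [hc1 hp1]]] := dec hc.
have [b2 [rest [hc2 hp2]]] := dec hc1.
have hrest : forall z, z \in rest -> z \in t' := fun z => mem_sub hc2.
have hdr : deg (map fst rest) v = 0%N by apply: avoid_deg => z /hrest /avoid.
have hcr : forall z, (count_mem z (z0 :: rest) <= count_mem z ews')%N.
  move=> z; rewrite (permP hpt) /= leq_add2l; exact: hc2.
case: b1 hp1 => hp1; case: b2 hp2 => hp2.
- have hps : perm_eq sub [:: ((x, v), hh), ((v, y), hh) & rest].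
    by apply: perm_trans hp1 _; rewrite perm_cons.
  rewrite (perm_big _ hps) (perm_size hps) !big_cons /=.
  have had' : adm (map fst (z0 :: rest)).
    move=> w; have := had w; rewrite (deg_perm _ (perm_map fst hps)) /= !deg_cons /= -hz0e /=.
    case: (eqVneq v w) => [<-|hvw]; last by rewrite addn0 /= add0n addnA.
    by rewrite hdr (negbTE hxv) [y == v]eq_sym (negbTE hvy).
  have := hQ' _ hcr isT had'; rewrite big_cons /= /hh => hle.
  move: hle; rewrite -[(size rest).+2]addn2 -[(size rest).+1]addn1 !natrD; lra.
- exfalso; have := had v; rewrite (deg_perm _ (perm_map fst hp1)) /= deg_cons /=.
  by rewrite (deg_perm _ (perm_map fst hp2)) hdr eqxx (negbTE hxv).
- exfalso; have := had v; rewrite (deg_perm _ (perm_map fst hp1)) /=.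
  by rewrite (deg_perm _ (perm_map fst hp2)) deg_cons /= hdr eqxx [y == v]eq_sym (negbTE hvy).
- have hps : perm_eq sub rest by apply: perm_trans hp1 hp2.
  rewrite (perm_big _ hps) (perm_size hps).
  have hcr' : forall z, (count_mem z rest <= count_mem z ews')%N.
    move=> z; apply: leq_trans (hcr z); rewrite /=; exact: leq_addl.
  apply: hQ' hcr' _ _.
    by move: hne; rewrite -!size_eq0 (perm_size hps).
  exact: adm_perm (perm_map fst hps) had.
Qed.


Lemma step_spike (x v : V) u :
  IHt V (size [:: x, v, x & u]) -> loopless [:: x, v, x & u] ->
  count_mem v [:: x, v, x & u] = 1%N ->
  exists ews, good [:: x, v, x & u] ews.
Proof.
move=> IH hl hv.
have hcs : cedges [:: x, v, x & u] = [:: (x, v), (v, x) & cedges (x :: u)]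
  by rewrite /cedges !rot1_cons.
move: (hl); rewrite /loopless hcs /= => /and3P [hxv hvx hZ].
have hu : u != [::].
  by apply/eqP => eu; move: hZ; rewrite eu /cedges /= eqxx.
have hvn : v \notin x :: u.
  apply/count_memPn; move: hv => /=; rewrite eqxx (negbTE hxv) /=; lia.
have hl' : loopless (x :: u) by [].
have hs' : (2 <= size (x :: u))%N by case: u hu {hcs hZ hl' hvn hv hl IH}.
have [ews' [hp' hw' hsum' hQ']] := IH (x :: u) (ltnW (ltnSn _)) hs' hl'.
have avoid : forall z, z \in ews' -> (z.1.1 != v) && (z.1.2 != v).
  move=> z hz; have : z.1 \in map fst ews' by apply: map_f.
  rewrite (perm_mem hp') => /mem_cedges /andP [h1 h2].
  by apply/andP; split; apply/eqP => e; move: hvn; rewrite -e ?h1 ?h2.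
have hnd : nd [:: x, v, x & u] = (nd (x :: u)).+1.
  rewrite !nd_cons !in_cons eqxx (negbTE hxv) /= add0n.
  by move: hvn; rewrite in_cons => /negbTE ->; rewrite add1n.
exists [:: ((x, v), 0), ((v, x), 0) & ews']; split.
- by rewrite hcs /= !perm_cons.
- by rewrite /=.
- rewrite !big_cons /= hnd add0r; move: hsum'.
  rewrite !mulnS !natrD /= -[(size u).+3]addn3 -[(size u).+1]addn1 !natrD; lra.
move=> sub hc hne had.
have [b1 [r1 [hc1 hp1]]] := dec hc.
have [b2 [rest [hc2 hp2]]] := dec hc1.
have hrest : forall z, z \in rest -> z \in ews' := fun z => mem_sub hc2.
have hdr : deg (map fst rest) v = 0%N by apply: avoid_deg => z /hrest /avoid.
case: b1 hp1 => hp1; case: b2 hp2 => hp2.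
- have hps : perm_eq sub [:: ((x, v), 0), ((v, x), 0) & rest].
    by apply: perm_trans hp1 _; rewrite perm_cons.
  rewrite (perm_big _ hps) (perm_size hps) !big_cons /= !add0r.
  have := sum_le1 (l := rest) (fun z hz => proj2 (andP (allP hw' z (hrest z hz)))).
  rewrite -[(size rest).+2]addn2 natrD; lra.
- exfalso; have := had v; rewrite (deg_perm _ (perm_map fst hp1)) /= deg_cons /=.
  by rewrite (deg_perm _ (perm_map fst hp2)) hdr eqxx (negbTE hxv).
- exfalso; have := had v; rewrite (deg_perm _ (perm_map fst hp1)) /=.
  by rewrite (deg_perm _ (perm_map fst hp2)) deg_cons /= hdr eqxx eq_sym (negbTE hxv).
- have hps : perm_eq sub rest by apply: perm_trans hp1 hp2.
  rewrite (perm_big _ hps) (perm_size hps).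
  apply: hQ' hc2 _ _.
    by move: hne; rewrite -!size_eq0 (perm_size hps).
  exact: adm_perm (perm_map fst hps) had.
Qed.


Lemma key (s : seq V) : (2 <= size s)%N -> loopless s -> exists ews, good s ews.
Proof.
have [n] := ubnP (size s); elim: n s => // n IHn s hn hs hl.
have IH : IHt V (size s).
  by move=> s' h1 h2 h3; apply: IHn => //; apply: leq_trans h1 _; rewrite -ltnS.
case hs2: (size s == 2%N).
  case: s {IH IHn hn hs} hl hs2 => [|x [|y [|]]] // hl _.
  move: (hl); rewrite /loopless /cedges /= => /andP [hxy _].
  exists [:: ((x, y), 0); ((y, x), 0)]; split.
  - by rewrite /cedges /=.
  - by rewrite /= ?lexx ?ler01.
  - rewrite !big_cons big_nil /nd /= mem_seq1 (negbTE hxy) /=; lra.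
  - apply: Q0 => z; rewrite !in_cons in_nil orbF => /orP [/eqP -> | /eqP ->] /=.
      by rewrite hxy.
    by rewrite eq_sym hxy.
have hs3 : (3 <= size s)%N by move: hs hs2; case: (size s) => [|[|[|]]].
case: (boolP (has (fun v => count_mem v s == 1%N) s)) => [/hasP [v hvs /eqP hv1] | hno].
- have hrot := rot_index hvs.
  move: hrot; set w := drop _ s ++ take _ s => hrot.
  have hw : (2 <= size w)%N.
    by move: (size_rot (index v s) s); rewrite hrot /= => e; move: hs3; rewrite -e.
  case: w hrot hw => [|y [|z w2]] // hrot _.
  move: hrot; rewrite (lastI z w2).
  set u := belast z w2; set x := last z w2 => hrot.
  have hs1 : rot (size s - 1) (rot (index v s) s) = [:: x, v, y & u].
    have := rotr1_rcons x [:: v, y & u]; rewrite /rotr => <-.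
    by rewrite -(size_rot (index v s) s) hrot.
  have hsz : size [:: x, v, y & u] = size s by rewrite -hs1 !size_rot.
  have hl1 : loopless [:: x, v, y & u] by rewrite -hs1 !loopless_rot.
  have hc1 : count_mem v [:: x, v, y & u] = 1%N by rewrite -hs1 !count_rot.
  suff [ews g] : exists ews, good [:: x, v, y & u] ews.
    by exists ews; apply: (good_rot (k := index v s)); apply: (good_rot (k := size s - 1)); rewrite hs1.
  have IH1 : IHt V (size [:: x, v, y & u]) by rewrite hsz.
  case: (eqVneq x y) => [exy|nxy].
    by rewrite -exy in IH1 hl1 hc1 *; apply: step_spike.
  exact: step_merge.
- have hm : map fst (map (fun e => (e, 0 : rat)) (cedges s)) = cedges s.
    by elim: (cedges s) => //= e l ->.
  exists (map (fun e => (e, 0 : rat)) (cedges s)); split.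
  + by rewrite hm.
  + by apply/allP => z /mapP [e _ ->].
  + rewrite big_map big1 // subr_le0.
    have h : (2 * nd s <= size s)%N.
      rewrite /nd (size_sum_count s); apply: sumn_ge2 => x.
      rewrite mem_undup => hx.
      have h1 : (0 < count_mem x s)%N by rewrite -has_count has_pred1.
      have := (hasPn hno) x hx; rewrite /=.
      by move: h1; case: (count_mem x s) => [|[|]].
    have : ((2 * nd s)%:R <= (size s)%:R :> rat) by rewrite ler_nat.
    lra.
  + apply: Q0 => z /mapP [e he ->] /=.
    exact: (allP hl) e he.
Qed.

End S.
Lemma perm_fun (K E : eqType) (ks : seq K) (f : K -> E) (ews : seq (E * rat)) :
  uniq ks -> perm_eq (map fst ews) (map f ks) ->
  exists w : K -> rat, perm_eq ews (map (fun k => (f k, w k)) ks).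
Proof.
elim: ks ews => [|k ks IH] ews /=.
  move=> _ /perm_nilP; case: ews => // _; by exists (fun _ => 0).
move=> /andP [hk hu] hp.
have : f k \in map fst ews by rewrite (perm_mem hp) mem_head.
case/mapP => z hz hze.
have hpz := perm_to_rem hz.
have hp2 : perm_eq (map fst (rem z ews)) (map f ks).
  rewrite -(perm_cons (f k)); apply: perm_trans hp; rewrite perm_sym.
  by move: (perm_map fst hpz); rewrite /= -hze.
have [w' hw'] := IH _ hu hp2.
exists (fun k' => if k' == k then z.2 else w' k').
apply: perm_trans hpz _; rewrite /= eqxx hze -surjective_pairing perm_cons.
apply: perm_trans hw' _.
rewrite (_ : [seq _ | k0 <- ks] = [seq (f k0, w' k0) | k0 <- ks]) //.
apply/eq_in_map => k' hk' /=; case: eqP => // ek; by move: hk; rewrite -ek hk'.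
Qed.

Lemma rot1_enum (L : nat) : (0 < L)%N -> rot 1 (enum 'I_L) = map (@ordS L) (enum 'I_L).
Proof.
case: L => [//|L'] _; apply: (inj_map val_inj).
rewrite map_rot val_enum_ord.
rewrite (_ : [seq \val i | i <- [seq ordS i | i <- enum 'I_L'.+1]] =
   [seq (i.+1 %% L'.+1)%N | i <- [seq \val i | i <- enum 'I_L'.+1]]); last first.
  by rewrite -!map_comp.
rewrite val_enum_ord.
have e : iota 0 L'.+1 = rcons (iota 0 L') L' by rewrite -cats1 -addn1 iotaD.
rewrite [in RHS]e map_rcons modnn [iota 0 L'.+1]/= rot1_cons.
congr rcons; rewrite (_ : iota 1 L' = map (addn 1) (iota 0 L')) ?(iotaDl 1 0) //. apply/esym.
by apply/eq_in_map => k; rewrite mem_iota add0n => hk /=; rewrite modn_small // ltnS.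
Qed.

Lemma sum_enum (L : nat) (P : pred 'I_L) (G : 'I_L -> rat) :
  \sum_(k <- enum 'I_L | P k) G k = \sum_(k < L | P k) G k.
Proof. by rewrite big_enum_cond. Qed.

Lemma sum_enumN (L : nat) (P : pred 'I_L) (G : 'I_L -> nat) :
  (\sum_(k <- enum 'I_L | P k) G k = \sum_(k < L | P k) G k)%N.
Proof. by rewrite big_enum_cond. Qed.

Lemma count_map_filter (T : Type) (Z : eqType) (F : T -> Z) (P : pred T) l z :
  (count_mem z (map F (filter P l)) <= count_mem z (map F l))%N.
Proof.
elim: l => [|k l IH] //=.
case: (P k) => /=; first by rewrite leq_add2l.
exact: leq_trans IH (leq_addl _ _).
Qed.

Unset Implicit Arguments.
Theorem lemma3p8 (ell L1 L p n : nat) :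
  (0 < ell)%N -> (ell <= L1)%N -> (2 <= L)%N ->
  forall (a : 'I_L -> 'I_n) (b : 'I_L -> seq 'I_p),
    is_multilabelling L1 ell a b ->
    0 <= excess ell a b.
Proof.
move=> hl0 _ hL a b [hi [hii hiii]].
set E := enum 'I_L.
set s := map a E.
have hedges : cedges s = map (fun k => (a k, a (ordS k))) E.
  by rewrite /cedges /s -map_rot rot1_enum ?(ltnW hL) // -map_comp zip_map.
have hsz : size s = L by rewrite size_map size_enum_ord.
have hll : loopless s.
  by rewrite /loopless hedges; apply/allP => e /mapP [k _ ->] /=; exact: (hi k).2.
have hs2 : (2 <= size s)%N by rewrite hsz.
have [ews [hp hw hsum hQ]] := key hs2 hll.
rewrite hedges in hp.
have [w hpw] := perm_fun (enum_uniq _) hp.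
set F := fun k => ((a k, a (ordS k)), w k).
have hw0 : forall k, 0 <= w k.
  move=> k; have : F k \in ews by rewrite (perm_mem hpw) map_f ?mem_enum.
  by move/(allP hw) => /andP [].
have hsw : \sum_(z <- ews) z.2 = \sum_(k < L) w k by rewrite (perm_big _ hpw) big_map sum_enum.
set used := [set j : 'I_p | [exists r, j \in b r]].
have hQE : Qprop (map F E).
  move=> sub hc; apply: hQ => z; rewrite (permP hpw); exact: hc.
have perj : forall j, j \in used ->
    \sum_(k < L | j \in b k) w k <= \sum_(k < L | j \in b k) 1 - 2.
  move=> j; rewrite inE => /existsP [k0 hk0].
  set sub := map F (filter (fun k => j \in b k) E).
  have hc : forall z, (count_mem z sub <= count_mem z (map F E))%N.
    by move=> z; apply: count_map_filter.
  have hne : sub != [::].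
    rewrite -size_eq0 size_map size_filter -lt0n -has_count.
    by apply/hasP; exists k0; rewrite ?mem_enum.
  have hadm : adm (map fst sub).
    move=> v; rewrite (_ : deg _ v = edge_count a b v j).
      by case: (hiii v j) => [->|h] //; rewrite neq_ltn h orbT.
    rewrite /deg /sub -map_comp big_map big_filter sum_enumN /edge_count big_mkcond /=.
    by apply: eq_bigr => k _; case: (j \in b k); rewrite ?andbT ?andbF.
  have := hQE sub hc hne hadm.
  rewrite /sub big_map big_filter sum_enum size_map size_filter.
  suff -> : (count (fun k => j \in b k) E)%:R = \sum_(k < L | j \in b k) (1 : rat) by [].
  by rewrite -sum1_count sum_enumN natr_sum.
have exch : forall G : 'I_L -> 'I_p -> rat,
    \sum_(k < L) \sum_(j | j \in b k) G k j = \sum_(j < p) \sum_(k < L | j \in b k) G k j.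
  move=> G; under eq_bigr do rewrite big_mkcond; rewrite exchange_big.
  by apply: eq_bigr => j _; rewrite [RHS]big_mkcond.
have hsize : forall k, (size (b k))%:R = \sum_(j | j \in b k) (1 : rat).
  move=> k; rewrite -(card_uniqP (hii k).2) -sum1_card natr_sum.
  by apply: eq_bigl => j.
set D := \sum_(k < L) ((size (b k))%:R : rat).
have hD : D = \sum_(j < p) \sum_(k < L | j \in b k) (1 : rat).
  by rewrite /D -exch; apply: eq_bigr => k _; rewrite hsize.
have hDW : \sum_(k < L) (size (b k))%:R * w k = \sum_(j < p) \sum_(k < L | j \in b k) w k.
  rewrite -exch; apply: eq_bigr => k _; rewrite hsize mulr_suml.
  by apply: eq_bigr => j _; rewrite mul1r.
have i1 : \sum_(j < p) \sum_(k < L | j \in b k) w k <=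
    \sum_(j < p) (\sum_(k < L | j \in b k) (1 : rat) - (if j \in used then 2 else 0)).
  apply: ler_sum => j _; case: (boolP (j \in used)) => hj; first exact: perj.
  have nk : forall k, (j \in b k) = false.
    move=> k; apply/negP => hk; move: hj; rewrite inE; case/existsP; by exists k.
  by rewrite !big1 ?subr0 // => k; rewrite nk.
rewrite sumrB -big_mkcond /= sumr_const -hD in i1.
have i2 : ell%:R * \sum_(k < L) w k <= \sum_(k < L) (size (b k))%:R * w k.
  rewrite mulr_sumr; apply: ler_sum => k _; apply: ler_wpM2r => //.
  by rewrite ler_nat; case/andP: (hii k).1.
have hr : r_of a = nd s.
  rewrite /r_of /nd -(card_uniqP (undup_uniq s)).
  apply: eq_card => x; rewrite mem_undup; apply/imsetP/mapP => [[r _ ->]|[r _ ->]];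
    by exists r; rewrite ?mem_enum.
have hc : c_of b = #|used| by [].
rewrite /excess hr hc -mulr_suml -/D.
move: hsum; rewrite hsw hsz => hsum.
have lpos : (0 : rat) < ell%:R by rewrite ltr0n.
set l := (ell%:R : rat) in lpos i2 *.
set R := ((nd s)%:R : rat).
set C := ((#|used|)%:R : rat).
have key2 : l * ((2 * nd s)%:R - 2 - L%:R) <= D - 2 *+ #|used|.
  apply: le_trans i1; rewrite -hDW; apply: le_trans i2.
  by rewrite ler_wpM2l // ltW.
have e2 : (2 : rat) *+ #|used| = 2 * C by rewrite /C mulr_natr.
rewrite natrM -/R e2 in key2.
have -> : 1 + L%:R / 2 + D / (2 * l) - R - C / l =
    ((D - 2 * C) - l * (2%:R * R - 2 - L%:R)) / (2 * l).
  by field; rewrite lt0r_neq0.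
apply: divr_ge0; last by rewrite mulr_ge0 // ltW.
by rewrite subr_ge0.
Qed.
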